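(* Consider the FlexPD-C iterates described in the context with $\beta>0$, integer $T\ge1$ and $0<\alpha<1/\rho(B)$, and let $C=\sum_{t=0}^{T-1}(I-\alpha B)^t$, $M=C^{-1}(I-\alpha B)^T$, $N=\frac{1}{\alpha}(C^{-1}-M)$. Then for any $\tilde d,\tilde g,\tilde e>1$ and every $k\ge0$, \[\|\lambda^{k+1}-\lambda^*\|^2\le\frac{\tilde d}{\alpha^2 s(AA')}\Big(\frac{\tilde e}{\tilde e-1}\rho(M)^2+\tilde e\alpha^2L^2\Big)\|x^k-x^{k+1}\|^2+\frac{\tilde d}{(\tilde d-1)\alpha^2 s(AA')}\Big(\frac{\tilde g}{\tilde g-1}\alpha^2\rho\big((\beta A'A-N)^2\big)+\tilde g\alpha^2L^2\Big)\|x^{k+1}-x^*\|^2,\] where $s(AA')$ is the smallest nonzero eigenvalue of $AA'$.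
   Context: Setting: $n$ agents are connected by a connected undirected graph with edge set $\mathcal E$, $\epsilon=|\mathcal E|$. For $x\in\mathbb R^n$ let $f(x)=\sum_{i=1}^n f_i(x_i)$, where each $f_i:\mathbb R\to\mathbb R$ is twice differentiable with $m\le f_i''\le L$ for constants $0<m\le L$; $\nabla f(x)=(f_1'(x_1),\dots,f_n'(x_n))'$. $A\in\mathbb R^{\epsilon\times n}$ is the edge–node incidence matrix (null space spanned by the all-ones vector). $B\in\mathbb R^{n\times n}$ is symmetric positive semidefinite with the same null space as $A$, off-diagonal entries nonzero only on edges. $x^*$ is the unique minimizer of $f$ subject to $Ax=0$ and $\lambda^*$ a Lagrange multiplier with $\nabla f(x^* )+A'\lambda^*=0$, $Ax^*=0$, $Bx^*=0$, chosen in the column space of $A$ (orthogonal to the null space of $A'$). FlexPD-C: given $\alpha,\beta>0$, $T\ge1$, $x^0$ arbitrary, $\lambda^0=0$; for $k\ge0$: $x^{k+1,0}=x^k$; for $t=1,\dots,T$, $x^{k+1,t}=x^{k+1,t-1}-\alpha\nabla f(x^k)-\alpha A'\lambda^k-\alpha Bx^{k+1,t-1}$; then $x^{k+1}=x^{k+1,T}$, $\lambda^{k+1}=\lambda^k+\beta Ax^{k+1}$. Notation: $\rho(S)$ largest eigenvalue of a symmetric matrix $S$; $\|\cdot\|$ Euclidean norm. *)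

(* Defs.v *)
From HB Require Import structures.
From mathcomp Require Import all_boot all_order all_algebra.
From mathcomp Require Import all_classical all_reals all_analysis.
Set Implicit Arguments. Unset Strict Implicit. Unset Printing Implicit Defensive.
Import Order.TTheory GRing.Theory Num.Theory.
Local Open Scope ring_scope.

Section Defs.
Variable R : realType.

Definition sqnorm (k : nat) (v : 'cV[R]_k) : R := \sum_i (v i 0) ^+ 2.

Definition is_max_eig (k : nat) (S : 'M[R]_k) (r : R) : Prop :=
  eigenvalue S r /\ forall a, eigenvalue S a -> a <= r.

Definition is_min_nonzero_eig (k : nat) (S : 'M[R]_k) (r : R) : Prop :=
  [/\ eigenvalue S r, r != 0 & forall a, eigenvalue S a -> a != 0 -> r <= a].

(* Graph given by its edges e : 'I_eps with endpoints ends e (an orientation). *)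
Definition graph_adj (n eps : nat) (ends : 'I_eps -> 'I_n * 'I_n) : rel 'I_n :=
  fun i j => [exists e, (ends e == (i, j)) || (ends e == (j, i))].

Definition simple_connected_graph (n eps : nat) (ends : 'I_eps -> 'I_n * 'I_n) : Prop :=
  [/\ forall e, (ends e).1 != (ends e).2,
      forall e e', (ends e == ends e') || (ends e == ((ends e').2, (ends e').1)) -> e = e'
    & forall i j, connect (graph_adj ends) i j].

Definition incidence (n eps : nat) (ends : 'I_eps -> 'I_n * 'I_n) : 'M[R]_(eps, n) :=
  \matrix_(e, i) (if i == (ends e).1 then 1 else if i == (ends e).2 then -1 else 0).

(* gradient of f(x) = sum_i f_i(x_i) *)
Definition grad (n : nat) (f : 'I_n -> R -> R) (x : 'cV[R]_n) : 'cV[R]_n :=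
  \col_i derive1 (f i) (x i 0).

Definition fsum (n : nat) (f : 'I_n -> R -> R) (x : 'cV[R]_n) : R :=
  \sum_i f i (x i 0).

Definition flexpd_inner (n eps : nat) (f : 'I_n -> R -> R) (A : 'M[R]_(eps, n))
  (B : 'M[R]_n) (alpha : R) (T : nat) (xk : 'cV[R]_n) (lk : 'cV[R]_eps) : 'cV[R]_n :=
  iter T (fun z => z - alpha *: grad f xk - alpha *: (A^T *m lk) - alpha *: (B *m z)) xk.

Definition Cmat (n : nat) (B : 'M[R]_n) (alpha : R) (T : nat) : 'M[R]_n :=
  \sum_(t < T) (1%:M - alpha *: B) ^+ t.
Definition Mmat (n : nat) (B : 'M[R]_n) (alpha : R) (T : nat) : 'M[R]_n :=
  invmx (Cmat B alpha T) *m (1%:M - alpha *: B) ^+ T.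
Definition Nmat (n : nat) (B : 'M[R]_n) (alpha : R) (T : nat) : 'M[R]_n :=
  alpha^-1 *: (invmx (Cmat B alpha T) - Mmat B alpha T).

End Defs.

(* Main.v *)
Require Import Defs.
From HB Require Import structures.
From mathcomp Require Import all_boot all_order all_algebra.
From mathcomp Require Import all_classical all_reals all_analysis.
From mathcomp Require Import complex ring lra.
Import Order.TTheory GRing.Theory Num.Theory.
Local Open Scope ring_scope.

Lemma lip_aux (R : realType) (g : R -> R) (L : R) :
  (forall t, derivable g t 1) -> (forall t, `|derive1 g t| <= L) ->
  forall a b, a < b -> `|g b - g a| <= L * `|b - a|.
Proof.
move=> dg bd a b ab.
have h1 : forall x, x \in `]a, b[ -> is_derive x 1 g (derive1 g x).
  move=> x _; rewrite derive1E; exact/derivableP.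
have [|c _ ->] := MVT ab h1.
  by apply: (@derivable_within_continuous R R g `[a, b]) => x _; exact: dg.
by rewrite normrM ler_wpM2r.
Qed.

Lemma lip (R : realType) (g : R -> R) (L : R) :
  (forall t, derivable g t 1) -> (forall t, `|derive1 g t| <= L) ->
  forall a b, `|g a - g b| <= L * `|a - b|.
Proof.
move=> dg bd a b; case: (ltgtP a b) => ab.
- by rewrite distrC (distrC a); exact: lip_aux.
- exact: lip_aux.
- by rewrite ab !subrr normr0 mulr0.
Qed.

Lemma grad_lip (R : realType) n (f : 'I_n -> R -> R) (m L : R) (x y : 'cV[R]_n) :
  0 < m -> (forall i t, derivable (derive1 (f i)) t 1) ->
  (forall i t, m <= derive1 (derive1 (f i)) t <= L) ->
  sqnorm (grad f x - grad f y) <= L ^+ 2 * sqnorm (x - y).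
Proof.
move=> m0 d2 bd; rewrite /sqnorm mulr_sumr; apply: ler_sum => i _.
rewrite !mxE.
have h : `|derive1 (f i) (x i 0) - derive1 (f i) (y i 0)| <= L * `|x i 0 - y i 0|.
  apply: lip => // t; have /andP[h1 h2] := bd i t.
  by rewrite ger0_norm // (le_trans _ h1) // ltW.
rewrite -[X in X <= _]real_normK ?num_real // -(real_normK (num_real (x i 0 - y i 0))).
rewrite -exprMn !expr2; apply: ler_pM => //.
Qed.

Lemma c_pos (R : realFieldType) (c : R) : 1 < c -> 0 <= c / (c - 1).
Proof. by move=> h; apply: divr_ge0; lra. Qed.
Lemma c_ge0 (R : realFieldType) (c : R) : 1 < c -> 0 <= c.
Proof. by move=> h; lra. Qed.

Lemma final_ineq (R : realFieldType) (a s dt gt et rM rQ L sy su sv : R) :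
  0 < a -> 0 < s -> 1 < dt -> 1 < gt -> 1 < et ->
  a ^+ 2 * (s * sy) <= dt / (dt - 1) * (gt / (gt - 1) * (a ^+ 2 * (rQ * sv))
      + gt * (a ^+ 2 * (L ^+ 2 * sv)))
    + dt * (et / (et - 1) * (rM ^+ 2 * su) + et * (a ^+ 2 * (L ^+ 2 * su))) ->
  sy <= dt / (a ^+ 2 * s) * (et / (et - 1) * rM ^+ 2 + et * a ^+ 2 * L ^+ 2) * su
      + dt / ((dt - 1) * a ^+ 2 * s) * (gt / (gt - 1) * a ^+ 2 * rQ + gt * a ^+ 2 * L ^+ 2) * sv.
Proof.
move=> a0 s0 d1 g1 e1 H.
have p : 0 < a ^+ 2 * s by rewrite mulr_gt0 // exprn_gt0.
have a0' : a != 0 by rewrite gt_eqF.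
have s0' : s != 0 by rewrite gt_eqF.
have d0 : dt - 1 != 0 by rewrite subr_eq0 gt_eqF.
have g0 : gt - 1 != 0 by rewrite subr_eq0 gt_eqF.
have e0 : et - 1 != 0 by rewrite subr_eq0 gt_eqF.
set E := (X in _ <= X) in H.
have -> : dt / (a ^+ 2 * s) * (et / (et - 1) * rM ^+ 2 + et * a ^+ 2 * L ^+ 2) * su
      + dt / ((dt - 1) * a ^+ 2 * s) * (gt / (gt - 1) * a ^+ 2 * rQ + gt * a ^+ 2 * L ^+ 2) * sv
      = E / (a ^+ 2 * s).
  rewrite /E; field.
  by rewrite s0' a0' e0 g0 d0.
rewrite ler_pdivlMr //; apply: le_trans H; rewrite le_eqVlt; apply/orP; left; apply/eqP; ring.
Qed.

Section Norms.
Variable R : realType.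

Lemma sqnorm_ge0 n (v : 'cV[R]_n) : 0 <= sqnorm v.
Proof. by apply: sumr_ge0 => i _; exact: sqr_ge0. Qed.

Lemma sqnormE n (v : 'cV[R]_n) : sqnorm v = (v^T *m v) 0 0.
Proof. by rewrite mxE; apply: eq_bigr => i _; rewrite !mxE expr2. Qed.

Lemma sqnormZ n (c : R) (v : 'cV[R]_n) : sqnorm (c *: v) = c ^+ 2 * sqnorm v.
Proof. by rewrite /sqnorm mulr_sumr; apply: eq_bigr => i _; rewrite !mxE exprMn. Qed.

Lemma sqnormN n (v : 'cV[R]_n) : sqnorm (- v) = sqnorm v.
Proof. by apply: eq_bigr => i _; rewrite !mxE sqrrN. Qed.

Lemma split_pt (c p q : R) : 1 < c -> (p + q) ^+ 2 <= c / (c - 1) * p ^+ 2 + c * q ^+ 2.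
Proof.
move=> c1; have c0 : c - 1 != 0 by rewrite subr_eq0 gt_eqF.
have -> : c / (c - 1) * p ^+ 2 + c * q ^+ 2 = (p + q) ^+ 2 + (p - (c - 1) * q) ^+ 2 / (c - 1).
  by field.
rewrite lerDl; apply: divr_ge0; [exact: sqr_ge0 | lra].
Qed.

Lemma sqnorm_split n (c : R) (p q : 'cV[R]_n) : 1 < c ->
  sqnorm (p + q) <= c / (c - 1) * sqnorm p + c * sqnorm q.
Proof.
move=> c1; rewrite /sqnorm !mulr_sumr -big_split /=.
by apply: ler_sum => i _; rewrite !mxE split_pt.
Qed.

Lemma sqnormM p n (S : 'M[R]_(p, n)) (v : 'cV[R]_n) :
  sqnorm (S *m v) = (v^T *m (S^T *m S) *m v) 0 0.
Proof. by rewrite sqnormE trmx_mul !mulmxA. Qed.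

End Norms.

Lemma Cmat_rec (R : realType) n (B : 'M[R]_n) alpha T :
  Cmat B alpha T.+1 = 1%:M + (1%:M - alpha *: B) *m Cmat B alpha T.
Proof.
rewrite /Cmat big_ord_recl expr0 mulmxE mulr_sumr; congr (_ + _).
by apply: eq_bigr => i _; rewrite exprS.
Qed.

Lemma inner_closed (R : realType) n eps (f : 'I_n -> R -> R) (A : 'M[R]_(eps, n))
  (B : 'M[R]_n) alpha T xk lk :
  flexpd_inner f A B alpha T xk lk =
  (1%:M - alpha *: B) ^+ T *m xk - alpha *: (Cmat B alpha T *m (grad f xk + A^T *m lk)).
Proof.
rewrite /flexpd_inner; elim: T => [|T IH].
  by rewrite /= expr0 mul1mx /Cmat big_ord0 mul0mx scaler0 subr0.
rewrite iterS IH Cmat_rec exprS.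
set W := 1%:M - alpha *: B; set g := grad f xk + A^T *m lk.
set z := W ^+ T *m xk - alpha *: (Cmat B alpha T *m g).
have Wz : forall u : 'cV[R]_n, W *m u = u - alpha *: (B *m u).
  by move=> u; rewrite /W mulmxBl mul1mx -scalemxAl.
rewrite mulmxDl mul1mx -!mulmxE -mulmxA scalerDr opprD addrA.
transitivity (W *m z - alpha *: g).
  by rewrite Wz /g scalerDr opprD !addrA [LHS]addrAC [X in X - _ = _]addrAC.
by rewrite /z mulmxBr -scalemxAr !mulmxA addrAC.
Qed.

Module Spectral.
Set Implicit Arguments. Unset Strict Implicit.
Import Num.Def.
Local Open Scope sesquilinear_scope.
Section Spec.
Variable R : realType.
Local Notation C := (R[i]).
Local Notation toC := (real_complex R).

Lemma toC_real (x : R) : toC x \is Num.real.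
Proof. by rewrite complex_real. Qed.

Lemma conj_toC (x : R) : (toC x)^* = toC x.
Proof. exact/conj_Creal/toC_real. Qed.

Lemma toC_le (x y : R) : (toC x <= toC y) = (x <= y).
Proof. exact: lecR. Qed.

Lemma map_toC_conj m n (M : 'M[R]_(m, n)) : map_mx conjC (map_mx toC M) = map_mx toC M.
Proof. by apply/matrixP => i j; rewrite !mxE conj_toC. Qed.

Lemma RS n (S : 'M[R]_n) : S^T = S ->
  exists P : 'M[C]_n, exists d : 'rV[R]_n,
    P \is unitarymx /\ map_mx toC S = P^t* *m diag_mx (map_mx toC d) *m P.
Proof.
move=> St.
have herm : map_mx toC S \is hermsymmx.
  apply: realsym_hermsym.
    apply/is_hermitianmxP; rewrite expr0 scale1r map_mx_id // map_trmx St //.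
  by apply/mxOverP => i j; rewrite mxE toC_real.
have /hermitian_normalmx /orthomx_spectralP E := herm.
have Preal := hermitian_spectral_diag_real herm.
exists (spectralmx (map_mx toC S)), (map_mx (@complex.Re R) (spectral_diag (map_mx toC S))).
split; first exact: spectral_unitarymx.
rewrite {1}E invmx_unitary ?spectral_unitarymx //; congr (_ *m diag_mx _ *m _).
apply/matrixP => i j; rewrite !mxE.
have := mxOverP Preal i j; case: (spectral_diag _ i j) => a b.
by rewrite complex_real => /eqP ->.
Qed.


Section K.
Variables (n : nat) (P : 'M[C]_n).
Hypothesis hP : P \is unitarymx.

Definition K (a : 'rV[R]_n) := P^t* *m diag_mx (map_mx toC a) *m P.

Lemma PPt : P *m P^t* = 1%:M.
Proof. exact/unitarymxP. Qed.
Lemma PtP : P^t* *m P = 1%:M.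
Proof. exact/mulmx1C/PPt. Qed.

Lemma KM a b : K a *m K b = K (\row_j (a 0 j * b 0 j)).
Proof.
rewrite /K !mulmxA -[_ *m P *m P^t*]mulmxA PPt mulmx1 -[_ *m diag_mx _ *m diag_mx _]mulmxA mulmx_diag.
by congr (_ *m diag_mx _ *m _); apply/matrixP => i j; rewrite !mxE rmorphM.
Qed.

Lemma KD a b : K a + K b = K (a + b).
Proof. by rewrite /K -mulmxDl -mulmxDr -linearD /= map_mxD. Qed.

Lemma KZ c a : toC c *: K a = K (c *: a).
Proof. by rewrite /K map_mxZ linearZ /= -scalemxAr -scalemxAl. Qed.

Lemma K0 : K 0 = 0.
Proof. by rewrite /K map_mx0 linear0 mulmx0 mul0mx. Qed.

Lemma K1 : K (const_mx 1) = 1%:M.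
Proof.
rewrite /K; have -> : map_mx toC (const_mx 1 : 'rV[R]_n) = const_mx 1.
  by apply/matrixP => i j; rewrite !mxE rmorph1.
by rewrite diag_const_mx mulmx1 PtP.
Qed.

Lemma KX a t : K a ^+ t = K (\row_j (a 0 j ^+ t)).
Proof.
elim: t => [|t IH].
  rewrite expr0; have -> : (\row_j a 0 j ^+ 0) = const_mx 1.
    by apply/matrixP => i j; rewrite !mxE expr0.
  by rewrite K1.
rewrite exprS IH -mulmxE KM; congr K; apply/matrixP => i j; by rewrite !mxE exprS.
Qed.

Lemma Ksum T (a : 'I_T -> 'rV[R]_n) : \sum_(t < T) K (a t) = K (\sum_(t < T) a t).
Proof.
elim/big_rec2: _ => [|t x y _ ->]; first by rewrite K0.
by rewrite KD.
Qed.

Lemma Kinv (a : 'rV[R]_n) : (forall j, a 0 j != 0) ->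
  K a \in unitmx /\ invmx (K a) = K (\row_j (a 0 j)^-1).
Proof.
move=> a0.
have E : K a *m K (\row_j (a 0 j)^-1) = 1%:M.
  rewrite KM -K1; congr K; apply/matrixP => i j; rewrite !mxE divff //.
have [U _] := mulmx1_unit E.
split => //.
by rewrite -[RHS](mulKmx U) E mulmx1.
Qed.

Lemma row1_neq0 j : row j P != 0.
Proof.
apply/eqP => h.
have : row j (P *m P^t*) = row j 1%:M by rewrite PPt.
rewrite row_mul h mul0mx => /matrixP /(_ 0 j); rewrite !mxE eqxx /=.
by move/eqP; rewrite eq_sym oner_eq0.
Qed.

Lemma Keig (S : 'M[R]_n) (a : 'rV[R]_n) : map_mx toC S = K a -> forall j, eigenvalue S (a 0 j).
Proof.
move=> E j; rewrite -(eigenvalue_map toC); apply/eigenvalueP.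
exists (row j P); last exact: row1_neq0.
rewrite E /K -row_mul !mulmxA PPt mul1mx.
apply/matrixP => i k; rewrite !mxE (bigD1 j) //= big1 ?addr0.
  by rewrite !mxE eqxx mulr1n.
by move=> l ne; rewrite !mxE eq_sym (negbTE ne) mulr0n mul0r.
Qed.

Lemma Kherm (a : 'rV[R]_n) : (K a)^t* = K a.
Proof.
rewrite /K !trmx_mul !map_mxM trmxCK tr_diag_mx map_diag_mx.
by rewrite map_toC_conj mulmxA.
Qed.

Lemma Ksym (S : 'M[R]_n) (a : 'rV[R]_n) : map_mx toC S = K a -> S^T = S.
Proof.
move=> E; apply: (@map_mx_inj _ _ toC).
by rewrite -[LHS]map_toC_conj -map_trmx E Kherm.
Qed.

Lemma quad_diag (w : 'cV[C]_n) (dd : 'rV[C]_n) :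
  (w^t* *m diag_mx dd *m w) 0 0 = \sum_j dd 0 j * `|w j 0| ^+ 2.
Proof.
rewrite mxE; apply: eq_bigr => j _; rewrite mul_mx_diag !mxE normCK.
by rewrite mulrAC mulrC [w j 0 * _]mulrC.
Qed.

Lemma quad_id (w : 'cV[C]_n) :
  (w^t* *m w) 0 0 = \sum_j `|w j 0| ^+ 2.
Proof.
rewrite mxE; apply: eq_bigr => j _; rewrite !mxE normCK mulrC //.
Qed.

Lemma Kquad (S : 'M[R]_n) (a : 'rV[R]_n) (v : 'cV[R]_n) : map_mx toC S = K a ->
  toC ((v^T *m S *m v) 0 0) = \sum_j toC (a 0 j) * `|(P *m map_mx toC v) j 0| ^+ 2.
Proof.
move=> E.
have -> : toC ((v^T *m S *m v) 0 0) = (map_mx toC (v^T *m S *m v)) 0 0 by rewrite [RHS]mxE.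
rewrite !map_mxM E /K -(@map_toC_conj _ _ v^T) -map_trmx.
transitivity (((P *m map_mx toC v)^t* *m diag_mx (map_mx toC a) *m (P *m map_mx toC v)) 0 0).
  by rewrite trmx_mul map_mxM !mulmxA.
by rewrite quad_diag; apply: eq_bigr => j _; rewrite mxE.
Qed.

Lemma Knorm (v : 'cV[R]_n) :
  toC (sqnorm v) = \sum_j `|(P *m map_mx toC v) j 0| ^+ 2.
Proof.
rewrite -quad_id trmx_mul map_mxM -mulmxA (mulmxA (P^t*)) PtP mul1mx.
rewrite /sqnorm rmorph_sum mxE; apply: eq_bigr => j _.
by rewrite !mxE /= conj_toC rmorphXn expr2.
Qed.

Lemma Kle (S : 'M[R]_n) (a : 'rV[R]_n) (v : 'cV[R]_n) r : map_mx toC S = K a ->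
  (forall j, a 0 j <= r) -> (v^T *m S *m v) 0 0 <= r * sqnorm v.
Proof.
move=> E h; rewrite -toC_le rmorphM /= (@Kquad S a v E) Knorm mulr_sumr.
apply: ler_sum => j _; apply: ler_wpM2r; first exact: exprn_ge0.
by rewrite toC_le.
Qed.

Lemma Kge (S : 'M[R]_n) (a : 'rV[R]_n) (v : 'cV[R]_n) r : map_mx toC S = K a ->
  (forall j, r <= a 0 j \/ (P *m map_mx toC v) j 0 = 0) ->
  r * sqnorm v <= (v^T *m S *m v) 0 0.
Proof.
move=> E h; rewrite -toC_le rmorphM /= (@Kquad S a v E) Knorm mulr_sumr.
apply: ler_sum => j _; case: (h j) => [hj|->].
  by apply: ler_wpM2r; [exact: exprn_ge0 | rewrite toC_le].
by rewrite normr0 expr0n /= !mulr0.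
Qed.

Lemma KB a b : K a - K b = K (a - b).
Proof. by rewrite /K map_mxB linearB /= mulmxBr mulmxBl. Qed.

Lemma Kker e (Am : 'M[R]_(n, e)) (a : 'rV[R]_n) j (wv : 'cV[R]_e) :
  map_mx toC (Am *m Am^T) = K a -> a 0 j = 0 ->
  (P *m map_mx toC (Am *m wv)) j 0 = 0.
Proof.
move=> E a0.
set r := row j P *m map_mx toC Am.
have PK : P *m K a = diag_mx (map_mx toC a) *m P.
  by rewrite /K !mulmxA PPt mul1mx.
have rowK : row j P *m K a = 0.
  rewrite -row_mul PK; apply/matrixP => i k; rewrite !mxE.
  rewrite (bigD1 j) //= big1 ?addr0.
    by rewrite !mxE eqxx mulr1n a0 rmorph0 mul0r.
  by move=> l ne; rewrite !mxE eq_sym (negbTE ne) mulr0n mul0r.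
have rr : r *m r^t* = 0.
  rewrite /r trmx_mul map_mxM -map_trmx map_toC_conj map_trmx !mulmxA.
  by rewrite -(mulmxA _ (map_mx toC Am)) -map_mxM E rowK !mul0mx.
have r0 : forall i, r 0 i = 0.
  move=> i; have : (r *m r^t*) 0 0 = 0 by rewrite rr mxE.
  rewrite mxE => /psumr_eq0P h.
  have nn : forall l, true -> 0 <= r 0 l * (r^t*) l 0.
    by move=> l _; rewrite !mxE -normCK exprn_ge0.
  have := h nn i isT; rewrite !mxE -normCK => /eqP; rewrite sqrf_eq0 normr_eq0 => /eqP //.
rewrite map_mxM mulmxA.
have -> : (P *m map_mx toC Am *m map_mx toC wv) j 0 = (r *m map_mx toC wv) 0 0.
  by rewrite /r -row_mul -row_mul [RHS]mxE.
by rewrite mxE big1 // => l _; rewrite r0 mul0r.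
Qed.

End K.
End Spec.

End Spectral.
Import Spectral.

Import Spectral.

Theorem lemma3p17
  (R : realType) (n eps : nat) (ends : 'I_eps -> 'I_n * 'I_n)
  (f : 'I_n -> R -> R) (m L : R) (B : 'M[R]_n)
  (alpha beta : R) (T : nat)
  (x : nat -> 'cV[R]_n) (lam : nat -> 'cV[R]_eps)
  (xs : 'cV[R]_n) (lams : 'cV[R]_eps)
  (rhoB rhoM rhoQ sAA : R) :
  (* graph and incidence matrix *)
  simple_connected_graph ends ->
  (* local objectives: twice differentiable, m <= f_i'' <= L *)
  0 < m -> m <= L ->
  (forall i t, derivable (f i) t 1) ->
  (forall i t, derivable (derive1 (f i)) t 1) ->
  (forall i t, m <= derive1 (derive1 (f i)) t <= L) ->
  (* B: symmetric PSD, same null space as A, off-diagonal support on edges *)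
  B^T = B ->
  (forall v : 'cV[R]_n, 0 <= (v^T *m B *m v) 0 0) ->
  (forall v : 'cV[R]_n, B *m v = 0 <-> incidence R ends *m v = 0) ->
  (forall i j, i != j -> B i j != 0 -> graph_adj ends i j) ->
  (* optimal primal-dual pair *)
  incidence R ends *m xs = 0 ->
  (forall y, incidence R ends *m y = 0 -> fsum f xs <= fsum f y) ->
  grad f xs + (incidence R ends)^T *m lams = 0 ->
  B *m xs = 0 ->
  (exists u : 'cV[R]_n, lams = incidence R ends *m u) ->
  (* parameters *)
  0 < beta -> (0 < T)%N ->
  is_max_eig B rhoB -> 0 < alpha -> alpha * rhoB < 1 ->
  (* FlexPD-C iterates *)
  lam 0%N = 0 ->
  (forall k, x k.+1 = flexpd_inner f (incidence R ends) B alpha T (x k) (lam k)) ->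
  (forall k, lam k.+1 = lam k + beta *: (incidence R ends *m x k.+1)) ->
  (* spectral quantities *)
  is_max_eig (Mmat B alpha T) rhoM ->
  is_max_eig ((beta *: ((incidence R ends)^T *m incidence R ends) - Nmat B alpha T) ^+ 2) rhoQ ->
  is_min_nonzero_eig (incidence R ends *m (incidence R ends)^T) sAA ->
  forall dt gt et : R, 1 < dt -> 1 < gt -> 1 < et ->
  forall k : nat,
    sqnorm (lam k.+1 - lams) <=
      dt / (alpha ^+ 2 * sAA) * (et / (et - 1) * rhoM ^+ 2 + et * alpha ^+ 2 * L ^+ 2)
        * sqnorm (x k - x k.+1)
    + dt / ((dt - 1) * alpha ^+ 2 * sAA)
        * (gt / (gt - 1) * alpha ^+ 2 * rhoQ + gt * alpha ^+ 2 * L ^+ 2)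
        * sqnorm (x k.+1 - xs).
Proof.
Proof.
set A := incidence R ends.
move=> _ m0 mL d1 d2 bd Bsym _ _ _ Axs _ KKT Bxs [u0 lamsE] beta0 T0 [_ maxB]
  alpha0 arB lam0 xrec lrec [_ maxM] [_ maxQ] [eigS sS0 minS] dt gt et dt1 gt1 et1 k.
have [P [d [PU BE]]] := RS Bsym.
set W := 1%:M - alpha *: B.
set w : 'rV[R]_n := \row_j (1 - alpha * d 0 j).
have wpos : forall j, 0 < w 0 j.
  move=> j; rewrite mxE subr_gt0; apply: le_lt_trans arB.
  by rewrite ler_pM2l //; exact: maxB (Keig PU BE j).
have WE : map_mx (real_complex R) W = K P w.
  rewrite /W map_mxB map_mx1 map_mxZ BE -(K1 PU) KZ KB; congr K.
  by apply/matrixP => i j; rewrite !mxE (ord1 i).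
have WXE : forall t, map_mx (real_complex R) (W ^+ t) = K P (\row_j (w 0 j ^+ t)).
  move=> t; rewrite -KX //; elim: t => [|t IH].
    by rewrite !expr0 map_mx1.
  by rewrite !exprS -!mulmxE map_mxM IH WE.
set c : 'rV[R]_n := \row_j (\sum_(t < T) w 0 j ^+ t).
have cpos : forall j, 0 < c 0 j.
  move=> j; rewrite mxE; case: T T0 {xrec maxM maxQ c} => // T' _.
  rewrite big_ord_recl expr0; apply: (lt_le_trans ltr01); rewrite lerDl.
  by apply: sumr_ge0 => i _; apply: exprn_ge0; apply: ltW.
have CE : map_mx (real_complex R) (Cmat B alpha T) = K P c.
  rewrite /Cmat raddf_sum /= -/W; under eq_bigr => i _ do rewrite WXE.
  rewrite Ksum; congr K.
  apply/matrixP => i j; rewrite summxE !mxE; apply: eq_bigr => t _; rewrite mxE.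
  by rewrite mxE.

have c0 : forall j, c 0 j != 0 by move=> j; rewrite gt_eqF.
have [CUC CinvE] := Kinv PU c0.
have Cunit : Cmat B alpha T \in unitmx by rewrite -(map_unitmx (real_complex R)) CE.
set mv : 'rV[R]_n := \row_j ((c 0 j)^-1 * w 0 j ^+ T).
have ME : map_mx (real_complex R) (Mmat B alpha T) = K P mv.
  rewrite /Mmat.
  rewrite map_mxM.
  rewrite map_invmx.
  rewrite CE CinvE.
  rewrite -/W WXE.
  rewrite (KM PU).
  congr K.
  by apply/matrixP => i j; rewrite !mxE.
set nv : 'rV[R]_n := \row_j (alpha^-1 * ((c 0 j)^-1 - mv 0 j)).
have NE : map_mx (real_complex R) (Nmat B alpha T) = K P nv.
  rewrite /Nmat map_mxZ map_mxB map_invmx CE CinvE ME KB KZ; congr K.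
  by apply/matrixP => i j; rewrite !mxE.
have Msym := Ksym ME.
have Nsym := Ksym NE.
have mv0 : forall j, 0 <= mv 0 j.
  move=> j; rewrite mxE; apply: mulr_ge0; first by rewrite invr_ge0 ltW.
  by apply: exprn_ge0; apply: ltW.
have Mbound : forall v, sqnorm (Mmat B alpha T *m v) <= rhoM ^+ 2 * sqnorm v.
  move=> v; rewrite sqnormM Msym.
  have := KM PU mv mv; rewrite -ME -map_mxM => E2.
  apply: (Kle PU v E2) => j; rewrite mxE expr2.
  have h := maxM _ (Keig PU ME j).
  by apply: ler_pM => //; rewrite (ord1 i).
set S := beta *: (A^T *m A) - Nmat B alpha T.
have Ssym : S^T = S by rewrite /S linearB /= linearZ /= trmx_mul trmxK Nsym.
have Qsym : (S ^+ 2)^T = S ^+ 2 by rewrite expr2 -mulmxE trmx_mul Ssym.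
have [PQ [dQ [PQU QE]]] := RS Qsym.
have Qbound : forall v, sqnorm (S *m v) <= rhoQ * sqnorm v.
  move=> v; rewrite sqnormM Ssym mulmxE -expr2; apply: (Kle PQU v QE) => j.
  exact: maxQ _ (Keig PQU QE j).
set G := A *m A^T.
have Gsym : G^T = G by rewrite /G trmx_mul trmxK.
have [PG [dG [PGU GE]]] := RS Gsym.
have sAApos : 0 < sAA.
  have [v vG v0] := eigenvalueP eigS.
  have h1 : (v *m G *m v^T) 0 0 = sAA * sqnorm v^T.
    by rewrite vG -scalemxAl mxE sqnormE trmxK.
  have h2 : (v *m G *m v^T) 0 0 = sqnorm (A^T *m v^T).
    by rewrite sqnormE trmx_mul !trmxK /G !mulmxA.
  have h3 : 0 < sqnorm v^T.
    rewrite lt_def sqnorm_ge0 andbT; apply: contra v0 => /eqP h.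
    apply/eqP/matrixP => i j; rewrite (ord1 i) mxE.
    have := psumr_eq0P (fun l _ => sqr_ge0 (v^T l 0)) h (i := j) isT.
    by rewrite mxE => /eqP; rewrite sqrf_eq0 => /eqP.
  have : 0 <= sAA * sqnorm v^T by rewrite -h1 h2 sqnorm_ge0.
  rewrite pmulr_lge0 // => h4; rewrite lt_def sS0 h4 //.
have Gbound : forall wv, sAA * sqnorm (A *m wv) <= sqnorm (A^T *m (A *m wv)).
  move=> wv; rewrite [X in _ <= X]sqnormM trmxK -/G.
  apply: (Kge PGU GE) => j; case: (eqVneq (dG 0 j) 0) => [h|h].
    by right; apply: (Kker PGU wv GE h).
  by left; apply: minS _ (Keig PGU GE j) h.
have lamR : forall k, exists wv, lam k = A *m wv.
  elim => [|k' [wv IH]]; first by exists 0; rewrite lam0 mulmx0.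
  by exists (wv + beta *: x k'.+1); rewrite lrec IH mulmxDr scalemxAr.
have [wk lamkE] := lamR k.+1.
have yE : lam k.+1 - lams = A *m (wk - u0) by rewrite lamkE lamsE mulmxBr.
have Wxs : forall t, W ^+ t *m xs = xs.
  elim => [|t IH]; first by rewrite expr0 mul1mx.
  by rewrite exprS -mulmxE -mulmxA IH /W mulmxBl mul1mx -scalemxAl Bxs scaler0 subr0.
have Nxs : Nmat B alpha T *m xs = 0.
  by rewrite /Nmat /Mmat -scalemxAl mulmxBl -mulmxA -/W Wxs subrr scaler0.
have step : invmx (Cmat B alpha T) *m x k.+1 =
    Mmat B alpha T *m x k - alpha *: (grad f (x k) + A^T *m lam k).
  by rewrite xrec inner_closed -/W mulmxBr -scalemxAr mulKmx // mulmxA.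
have CinvMN : invmx (Cmat B alpha T) = Mmat B alpha T + alpha *: Nmat B alpha T.
  by rewrite /Nmat scalerA mulfV ?gt_eqF // scale1r addrC subrK.
have KEY : alpha *: (A^T *m (lam k.+1 - lams)) =
   (Mmat B alpha T *m (x k - x k.+1) - alpha *: (grad f (x k) - grad f (x k.+1))) +
   (alpha *: (S *m (x k.+1 - xs)) - alpha *: (grad f (x k.+1) - grad f xs)).
  have F1 := step; rewrite CinvMN mulmxDl -scalemxAl in F1.
  have F2 : A^T *m lam k.+1 = A^T *m lam k + beta *: (A^T *m (A *m x k.+1)).
    by rewrite lrec mulmxDr !scalemxAr.
  have F5 : A^T *m (A *m xs) = 0 by rewrite Axs mulmx0.
  rewrite /S; move: F1 F2 F5 Nxs KKT.
  move: (Mmat B alpha T) (Nmat B alpha T) => Mm Nm F1 F2 F5 Nxs KKT.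
  rewrite !mulmxBr F2 !mulmxBl -!scalemxAl -!mulmxA Nxs F5 scaler0 subr0 subr0.
  apply/matrixP => i j; move/matrixP: F1 => /(_ i j); move/matrixP: KKT => /(_ i j).
  rewrite !mxE => h1 h2.
  have h3 := congr1 (fun t => alpha * t) h1; rewrite /= mulr0 in h3.
  lra.
have a0 : 0 <= alpha ^+ 2 by apply: exprn_ge0; apply: ltW.
have h1 : alpha ^+ 2 * (sAA * sqnorm (lam k.+1 - lams)) <=
    sqnorm (alpha *: (A^T *m (lam k.+1 - lams))).
  by rewrite sqnormZ ler_wpM2l // yE; exact: Gbound.
have ha : sqnorm (Mmat B alpha T *m (x k - x k.+1) - alpha *: (grad f (x k) - grad f (x k.+1)))
   <= et / (et - 1) * (rhoM ^+ 2 * sqnorm (x k - x k.+1))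
      + et * (alpha ^+ 2 * (L ^+ 2 * sqnorm (x k - x k.+1))).
  apply: le_trans (sqnorm_split _ _ _ _ _ et1) _.
  rewrite sqnormN sqnormZ; apply: lerD.
    by apply: ler_wpM2l; [exact: c_pos | exact: Mbound].
  apply: ler_wpM2l; first exact: c_ge0.
  by apply: ler_wpM2l => //; exact: (@grad_lip R n f m L _ _ m0 d2 bd).
have hb : sqnorm (alpha *: (S *m (x k.+1 - xs)) - alpha *: (grad f (x k.+1) - grad f xs))
   <= gt / (gt - 1) * (alpha ^+ 2 * (rhoQ * sqnorm (x k.+1 - xs)))
      + gt * (alpha ^+ 2 * (L ^+ 2 * sqnorm (x k.+1 - xs))).
  apply: le_trans (sqnorm_split _ _ _ _ _ gt1) _.
  rewrite sqnormN !sqnormZ; apply: lerD.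
    by apply: ler_wpM2l; [exact: c_pos | apply: ler_wpM2l => //; exact: Qbound].
  apply: ler_wpM2l; first exact: c_ge0.
  by apply: ler_wpM2l => //; exact: (@grad_lip R n f m L _ _ m0 d2 bd).
have H : alpha ^+ 2 * (sAA * sqnorm (lam k.+1 - lams)) <=
    dt / (dt - 1) * (gt / (gt - 1) * (alpha ^+ 2 * (rhoQ * sqnorm (x k.+1 - xs)))
      + gt * (alpha ^+ 2 * (L ^+ 2 * sqnorm (x k.+1 - xs))))
    + dt * (et / (et - 1) * (rhoM ^+ 2 * sqnorm (x k - x k.+1))
      + et * (alpha ^+ 2 * (L ^+ 2 * sqnorm (x k - x k.+1)))).
  apply: le_trans h1 _; rewrite KEY addrC.
  apply: le_trans (sqnorm_split _ _ _ _ _ dt1) _.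
  apply: lerD.
    by apply: ler_wpM2l; [exact: c_pos | exact: hb].
  by apply: ler_wpM2l; [exact: c_ge0 | exact: ha].
exact: (@final_ineq _ _ _ _ _ _ _ _ _ _ _ _ alpha0 sAApos dt1 gt1 et1 H).
Qed.
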